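(* Every digraph $F$ is $\vec{\chi}$-maderian. More precisely, $\mathrm{mad}_{\vec{\chi}}(F)\leq 4^m(n-1)+1$, where $m=|A(F)|$ and $n=|V(F)|$.
   Context: $\vec{\chi}(D)$, the dichromatic number, is the least $k$ such that $V(D)$ can be partitioned into $k$ sets each inducing an acyclic subdigraph. A subdivision of $F$ is obtained by replacing each arc $(x,y)$ by a directed $(x,y)$-path, internally disjoint with new internal vertices. $F$ is $\vec{\chi}$-maderian if there is an integer $c$ such that every digraph $D$ with $\vec{\chi}(D)\ge c$ contains a subdivision of $F$ as a subdigraph; $\mathrm{mad}_{\vec{\chi}}(F)$ is the least such $c$. *)

(* Defs.v *)
(* Finite digraphs are loopless relations e : rel V on a finType V
   (digons allowed, no parallel arcs). *)
From mathcomp Require Import all_boot.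
Set Implicit Arguments. Unset Strict Implicit. Unset Printing Implicit Defensive.

Definition acyclic_in (V : finType) (e : rel V) (A : {set V}) : bool :=
  [forall x in A, forall y in A,
     e x y ==> ~~ connect [rel u v | [&& u \in A, v \in A & e u v]] y x].

Definition dicolorable (V : finType) (e : rel V) (k : nat) : bool :=
  [exists col : {ffun V -> 'I_k},
     [forall i : 'I_k, acyclic_in e [set x | col x == i]]].

(* Dichromatic number: least k such that e is k-dicolourable.  For a loopless digraph
   k = #|V| always works, so the search range 0..#|V| is exhaustive. *)
Definition dichromatic (V : finType) (e : rel V) : nat :=
  find (dicolorable e) (iota 0 #|V|.+1).

Definition loopless (V : finType) (e : rel V) : Prop := forall x, ~~ e x x.

Definition arcs (V : finType) (e : rel V) : {set V * V} := [set a | e a.1 a.2].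

(* D (on VD, arcs d) contains a subdivision of F (on VF, arcs f) as a subdigraph:
   an injective choice of branch vertices phi and, for every arc (x,y) of F, a directed
   (phi x, phi y)-path in D whose sequence of internal vertices is P x y; all internal
   vertices of all paths are pairwise distinct and distinct from the branch vertices. *)
Definition contains_subdivision (VF VD : finType) (f : rel VF) (d : rel VD) : Prop :=
  exists (phi : VF -> VD) (P : VF -> VF -> seq VD),
    injective phi /\
    (forall x y, f x y -> path d (phi x) (rcons (P x y) (phi y))) /\
    uniq (flatten [seq P a.1 a.2 | a <- enum (arcs f)] ++ [seq phi x | x <- enum VF]).

(* Main.v *)
Require Import Defs.
From mathcomp Require Import all_boot.
From Stdlib Require Import Classical IndefiniteDescription.
From mathcomp Require Import zify.
Set Implicit Arguments. Unset Strict Implicit. Unset Printing Implicit Defensive.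

Definition restr (V : finType) (R : rel V) (Z : {set V}) : rel V :=
  [rel u v | [&& u \in Z, v \in Z & R u v]].

Definition colorable (V : finType) (d : rel V) (A : {set V}) (k : nat) : Prop :=
  exists c : V -> nat, (forall x, x \in A -> c x < k) /\
    forall i, acyclic_in d [set x in A | c x == i].

Lemma acyclicP (V : finType) (d : rel V) (X : {set V}) :
  (forall x y, x \in X -> y \in X -> d x y -> connect (restr d X) y x -> False) ->
  acyclic_in d X.
Proof.
move=> H; apply/forall_inP=> x xX; apply/forall_inP=> y yX; apply/implyP=> dxy.
by apply/negP=> /(H x y xX yX dxy).
Qed.

Lemma acyclicE (V : finType) (d : rel V) (X : {set V}) x y :
  acyclic_in d X -> x \in X -> y \in X -> d x y -> connect (restr d X) y x -> False.
Proof.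
move=> /forall_inP/(_ x) H xX yX dxy c.
by move: (H xX) => /forall_inP/(_ y yX)/implyP/(_ dxy)/negP; apply.
Qed.

Lemma restr_sub (V : finType) (R : rel V) (X Y : {set V}) :
  X \subset Y -> subrel (restr R X) (restr R Y).
Proof.
move=> /subsetP sXY u v /and3P[uX vX Ruv]; apply/and3P; split=> //; exact: sXY.
Qed.

Lemma connect_mono (V : finType) (R R' : rel V) :
  subrel R R' -> forall x y, connect R x y -> connect R' x y.
Proof. by move=> s; apply: connect_sub => x y /s; apply: connect1. Qed.

Lemma acyclic_sub (V : finType) (d : rel V) (X Y : {set V}) :
  Y \subset X -> acyclic_in d X -> acyclic_in d Y.
Proof.
move=> sYX aX; apply: acyclicP => x y xY yY dxy c.
have /subsetP s := sYX.
apply: (acyclicE aX (s _ xY) (s _ yY) dxy).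
exact: connect_mono (restr_sub (R:=d) sYX) _ _ c.
Qed.

Lemma colorable_sub (V : finType) (d : rel V) (X Y : {set V}) k :
  colorable d X k -> Y \subset X -> colorable d Y k.
Proof.
move=> [c [ck ca]] /subsetP sYX; exists c; split=> [x /sYX|i]; first exact: ck.
apply: acyclic_sub (ca i); apply/subsetP=> x; rewrite !inE => /andP[/sYX -> ->].
done.
Qed.

Lemma colorable_le (V : finType) (d : rel V) (X : {set V}) k k' :
  colorable d X k -> k <= k' -> colorable d X k'.
Proof.
move=> [c [ck ca]] kk; exists c; split=> // x /ck h; exact: leq_trans h kk.
Qed.

Lemma colorable_U (V : finType) (d : rel V) (X Y : {set V}) a b :
  colorable d X a -> colorable d Y b -> colorable d (X :|: Y) (a + b).
Proof.
move=> [c1 [c1k c1a]] [c2 [c2k c2a]].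
exists (fun x => if x \in X then c1 x else a + c2 x); split.
  move=> x; rewrite inE; case: ifP => xX /= xY; first by rewrite ltn_addr ?c1k.
  by rewrite ltn_add2l c2k.
move=> i; case: (ltnP i a) => ia.
  apply: acyclic_sub (c1a i); apply/subsetP=> x; rewrite !inE.
  case: ifP => xX /andP[_ /eqP ci]; first by rewrite ci eqxx andbT.
  by move: ia; rewrite -ci ltnNge leq_addr.
apply: acyclic_sub (c2a (i - a)); apply/subsetP=> x; rewrite !inE.
case: ifP => xX /andP[xXY /eqP ci].
  by move: ia; rewrite -ci leqNgt c1k.
by move: xXY => /= ->; rewrite -ci addKn eqxx.
Qed.

Lemma colorable0 (V : finType) (d : rel V) k : colorable d set0 k.
Proof.
exists (fun _ => 0); split=> [x|i]; first by rewrite inE.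
by apply: acyclicP => x y; rewrite !inE.
Qed.

Lemma colorable_card (V : finType) (d : rel V) (A : {set V}) :
  loopless d -> colorable d A #|A|.
Proof.
move=> ll; exists (fun x => index x (enum A)); split=> [x xA|i].
  by rewrite cardE index_mem mem_enum.
apply: acyclicP => x y; rewrite !inE => /andP[xA /eqP ix] /andP[yA /eqP iy].
have -> : x = y.
  have xe : x \in enum A by rewrite mem_enum.
  have ye : y \in enum A by rewrite mem_enum.
  by rewrite -(nth_index x xe) ix -iy nth_index.
by rewrite (negbTE (ll y)).
Qed.

Lemma restrE (V : finType) (R : rel V) (Z : {set V}) u v :
  restr R Z u v = [&& u \in Z, v \in Z & R u v].
Proof. by []. Qed.

Lemma connect_restrict (V : finType) (d : rel V) (X Y : {set V}) a b :
  connect (restr d X) a b ->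
  (forall z, connect (restr d X) a z -> connect (restr d X) z b -> z \in Y) ->
  connect (restr d (X :&: Y)) a b.
Proof.
move=> /connectP[p Hp ->]; elim: p a Hp => [|z p IH] a /=; first by rewrite connect0.
case/andP=> Haz Hp HY.
have zb : connect (restr d X) z (last z p) by apply/connectP; exists p.
have aY : a \in Y by apply: HY; [exact: connect0 | exact: connect_trans (connect1 Haz) zb].
have zY : z \in Y by apply: HY; [exact: connect1 Haz|].
apply: connect_trans (IH z Hp _).
  apply: connect1; move: Haz => /and3P[aX zX dz]; apply/and3P; split=> //; rewrite inE; apply/andP; done.
move=> w zw wb; apply: HY wb; exact: connect_trans (connect1 Haz) zw.
Qed.

Lemma fiber_lemma (V : finType) (d : rel V) (L : eqType) (B : {set V}) (lam : V -> L) K :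
  (forall x y, x \in B -> y \in B -> connect (restr d B) x y -> connect (restr d B) y x ->
     lam x = lam y) ->
  (forall l, colorable d [set x in B | lam x == l] K) -> colorable d B K.
Proof.
move=> Hl Hc.
pose c l := proj1_sig (constructive_indefinite_description _ (Hc l)).
have cP l : (forall x, x \in [set x in B | lam x == l] -> c l x < K) /\
    forall i, acyclic_in d [set x in [set x in B | lam x == l] | c l x == i].
  exact: proj2_sig (constructive_indefinite_description _ (Hc l)).
exists (fun x => c (lam x) x); split=> [x xB|i].
  by apply: (proj1 (cP (lam x))); rewrite !inE xB eqxx.
apply: acyclicP => x y; rewrite !inE => /andP[xB /eqP cx] /andP[yB /eqP cy] dxy cyx.
set Ci := [set x in B | c (lam x) x == i] in cyx.
have CiB : Ci \subset B by apply/subsetP=> z; rewrite inE => /andP[].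
have xy : connect (restr d Ci) x y by apply: connect1; rewrite restrE !inE xB yB cx cy !eqxx.
have lxy : lam x = lam y.
  apply: (Hl) => //; first exact: (connect_mono (restr_sub CiB) xy).
  exact: (connect_mono (restr_sub CiB) cyx).
have H' : connect (restr d (Ci :&: [set z | lam z == lam x])) y x.
  apply: connect_restrict cyx _ => z yz zx; rewrite inE; apply/eqP; apply: (Hl).
  - move: (connect_mono (restr_sub CiB) zx); case/connectP=> [[|w p]] /=.
      by move=> _ <-.
    by case/andP=> /and3P[].
  - exact: xB.
  - exact: (connect_mono (restr_sub CiB) zx).
  - exact: (connect_mono (restr_sub CiB) (connect_trans xy yz)).
apply: (acyclicE (proj2 (cP (lam x)) i) _ _ dxy).
- by rewrite !inE xB cx !eqxx.
- by rewrite !inE yB -lxy eqxx /= lxy cy eqxx.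
apply: (connect_mono _ H'); apply: restr_sub; apply/subsetP=> z.
rewrite !inE => /andP[/andP[zB /eqP cz] /eqP lz]; by rewrite zB lz eqxx -lz cz eqxx.
Qed.

Lemma connect_pre (V : finType) (R P : rel V) :
  reflexive P -> transitive P -> subrel R P -> forall x y, connect R x y -> P x y.
Proof.
move=> rP tP sRP x y /connectP[p Hp ->]; elim: p x Hp => [|z p IH] x /= Hp; first exact: rP.
case/andP: Hp => Rxz Hp; exact: tP (sRP _ _ Rxz) (IH _ Hp).
Qed.

Lemma parity (V : finType) (d : rel V) (B : {set V}) (g : V -> nat) (o : bool) K :
  (forall u v, u \in B -> v \in B -> d u v ->
     if o then g v <= (g u).+1 else g u <= (g v).+1) ->
  ~ colorable d B (K + K) -> exists j, ~ colorable d [set x in B | g x == j] K.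
Proof.
move=> Hg Hn; apply: NNPP => Hne; apply: Hn.
have Hall j : colorable d [set x in B | g x == j] K.
  by apply: NNPP => h; apply: Hne; exists j.
have Hp p : colorable d [set x in B | odd (g x) == p] K.
  apply: (fiber_lemma (lam := g)) => [x y xB yB cxy cyx|j].
  - set Bp := [set x in B | odd (g x) == p] in cxy cyx *.
    have arc u v : restr d Bp u v -> if o then g v <= g u else g u <= g v.
      move=> /and3P[]; rewrite !inE => /andP[uB /eqP pu] /andP[vB /eqP pv] duv.
      have := Hg u v uB vB duv; case: (o) => h.
        rewrite leq_eqVlt ltnS in h; case/orP: h => // /eqP e.
        by move: pv; rewrite e /= pu; case: (p).
      rewrite leq_eqVlt ltnS in h; case/orP: h => // /eqP e.
      by move: pu; rewrite e /= pv; case: (p).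
    case: (o) arc => arc.
      have c1 := connect_pre (P := [rel a b | g b <= g a]) (fun a => leqnn (g a))
        (fun b a c (h1 : g b <= g a) (h2 : g c <= g b) => leq_trans h2 h1) arc.
      by apply/eqP; rewrite eqn_leq; apply/andP; split; first [exact: (c1 _ _ cyx) | exact: (c1 _ _ cxy)].
    have c1 := connect_pre (P := [rel a b | g a <= g b]) (fun a => leqnn (g a))
      (fun b a c (h1 : g a <= g b) (h2 : g b <= g c) => leq_trans h1 h2) arc.
    by apply/eqP; rewrite eqn_leq; apply/andP; split; first [exact: (c1 _ _ cyx) | exact: (c1 _ _ cxy)].
  - apply: colorable_sub (Hall j) _; apply/subsetP=> x; rewrite !inE.
    by case/andP=> /andP[-> _] ->.
apply: colorable_sub (colorable_U (Hp false) (Hp true)) _.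
by apply/subsetP=> x xB; rewrite !inE xB; case: odd.
Qed.

Fixpoint reachk (V : finType) (R : rel V) (k : nat) (s v : V) : bool :=
  if k is k'.+1 then reachk R k' s v || [exists w, reachk R k' s w && R w v]
  else s == v.

Lemma reach_path (V : finType) (R : rel V) s p :
  path R s p -> reachk R (size p) s (last s p).
Proof.
elim/last_ind: p => [|p z IH] /=; first by rewrite eqxx.
rewrite rcons_path size_rcons last_rcons => /andP[Hp Rz] /=.
by apply/orP; right; apply/existsP; exists (last s p); rewrite IH.
Qed.

Lemma reach_connect (V : finType) (R : rel V) k s v :
  reachk R k s v -> connect R s v.
Proof.
elim: k v => [|k IH] v /=; first by move/eqP=> ->; exact: connect0.
case/orP=> [/IH //|/existsP[w /andP[/IH sw Rwv]]].
exact: connect_trans sw (connect1 Rwv).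
Qed.

Lemma dist_ex (V : finType) (R : rel V) s v :
  exists n, reachk R n s v || ~~ connect R s v.
Proof.
case c: (connect R s v); last by exists 0; rewrite orbT.
move/connectP: c => [p Hp ->]; exists (size p); by rewrite reach_path.
Qed.

Definition dist (V : finType) (R : rel V) s v := ex_minn (dist_ex R s v).

Lemma dist_reach (V : finType) (R : rel V) s v :
  connect R s v -> reachk R (dist R s v) s v.
Proof. by move=> c; rewrite /dist; case: ex_minnP => m; rewrite c orbF. Qed.

Lemma dist_min (V : finType) (R : rel V) k s v :
  reachk R k s v -> dist R s v <= k.
Proof. by move=> r; rewrite /dist; case: ex_minnP => m _; apply; rewrite r. Qed.

Lemma dist_arc (V : finType) (R : rel V) s u v :
  connect R s u -> R u v -> dist R s v <= (dist R s u).+1.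
Proof.
move=> c Ruv; apply: dist_min => /=; apply/orP; right.
by apply/existsP; exists u; rewrite dist_reach.
Qed.

Lemma dist_pred (V : finType) (R : rel V) s v k :
  connect R s v -> dist R s v = k.+1 ->
  exists w, [/\ R w v, connect R s w & dist R s w = k].
Proof.
move=> c dv; have := dist_reach c; rewrite dv /=.
case/orP=> [/dist_min|/existsP[w /andP[rw Rwv]]]; first by rewrite dv ltnn.
have cw := reach_connect rw.
exists w; split=> //; apply/eqP; rewrite eqn_leq dist_min //=.
by rewrite -ltnS -dv dist_arc.
Qed.

Lemma dist0 (V : finType) (R : rel V) s v :
  connect R s v -> dist R s v = 0 -> v = s.
Proof. by move=> c d0; have := dist_reach c; rewrite d0 /= => /eqP. Qed.

Lemma dist_walk (V : finType) (R : rel V) s k v :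
  connect R s v -> dist R s v = k ->
  connect (restr R [set z | (dist R s z < k) || (z == v)]) s v.
Proof.
elim: k v => [|k IH] v c dv.
  by rewrite (dist0 c dv) connect0.
have [w [Rwv cw dw]] := dist_pred c dv.
apply: connect_trans (connect_mono _ (IH w cw dw)) _.
  apply: restr_sub; apply/subsetP=> z; rewrite !inE => /orP[h|/eqP->].
    by rewrite ltnW.
  by rewrite dw ltnSn.
apply: connect1; rewrite restrE !inE dw ltnSn eqxx orbT /=; done.
Qed.

Lemma extract (V : finType) (R : rel V) u v :
  u != v -> connect R u v -> exists Q, path R u (rcons Q v) /\ uniq (u :: rcons Q v).
Proof.
move=> nuv /connectP[p Hp ev]; rewrite ev in nuv *; move: nuv.
case/shortenP: Hp => p' Hp' Hu _.
case/lastP: p' Hp' Hu => [|Q z]; first by rewrite /= eqxx.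
by rewrite last_rcons => Hp Hu _; exists Q.
Qed.

Lemma path_restr_in (V : finType) (R : rel V) (Z : {set V}) u p :
  path (restr R Z) u p -> forall z, z \in p -> z \in Z.
Proof.
elim: p u => // a p IH u /= /andP[/and3P[_ aZ _] Hp] z.
by rewrite inE => /orP[/eqP->|]; [done | exact: IH Hp z].
Qed.

Lemma key (V : finType) (d : rel V) (A : {set V}) K :
  ~ colorable d A ((K + K) + (K + K)) ->
  exists S : {set V}, [/\ S \subset A, ~ colorable d S K &
    forall u v, u \in S -> v \in S -> u != v ->
      exists Q, [/\ path d u (rcons Q v), uniq Q &
                    forall z, z \in Q -> z \in A /\ z \notin S]].
Proof.
move=> HA.
pose R := restr d A.
pose scc x := [set y | connect R x y && connect R y x].
have [l Hl] : exists l, ~ colorable d [set x in A | scc x == l] ((K + K) + (K + K)).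
  apply: NNPP => h; apply: HA; apply: (fiber_lemma (lam := scc)) => [x y _ _ cxy cyx|l].
    apply/setP=> z; rewrite !inE; apply/andP/andP=> [[xz zx]|[yz zy]]; split.
    - exact: connect_trans cyx xz.
    - exact: connect_trans zx cxy.
    - exact: connect_trans cxy yz.
    - exact: connect_trans zy cyx.
  by apply: NNPP => h'; apply: h; exists l.
set C := [set x in A | scc x == l] in Hl.
have [r rC] : exists r, r \in C.
  apply: NNPP => h; apply: Hl; suff -> : C = set0 by apply: colorable0.
  apply/setP=> z; rewrite [RHS]inE; apply/negbTE/negP => zC; apply: h; by exists z.
have CA : C \subset A by apply/subsetP=> z; rewrite inE => /andP[].
have Cr z : z \in C -> connect R r z && connect R z r.
  move: rC; rewrite !inE => /andP[_ /eqP rl] /andP[_ /eqP zl].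
  have : r \in scc z by rewrite zl -rl inE connect0.
  by rewrite inE andbC.
pose lev := dist R r.
have [i Hi] : exists i, ~ colorable d [set x in C | lev x == i] (K + K).
  apply: (parity (o := true)) Hl => u v uC vC duv.
  apply: dist_arc; first by case/andP: (Cr u uC).
  by rewrite /R restrE (subsetP CA _ uC) (subsetP CA _ vC).
set L := [set x in C | lev x == i] in Hi.
have LC : L \subset C by apply/subsetP=> z; rewrite inE => /andP[].
pose RT := [rel x y | R y x].
pose g2 := dist RT r.
have CrT z : z \in C -> connect RT r z.
  by move=> zC; rewrite connect_rev /=; case/andP: (Cr z zC).
have [j Hj] : exists j, ~ colorable d [set x in L | g2 x == j] K.
  apply: (parity (o := false)) Hi => u w uL wL duw.
  have uC := subsetP LC _ uL; have wC := subsetP LC _ wL.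
  apply: dist_arc; first exact: CrT.
  by rewrite /= /R restrE (subsetP CA _ uC) (subsetP CA _ wC).
set S := [set x in L | g2 x == j] in Hj.
have SL : S \subset L by apply/subsetP=> z; rewrite inE => /andP[].
have SA : S \subset A by apply: subset_trans SL (subset_trans LC CA).
exists S; split=> // u v uS vS nuv.
have uC := subsetP LC _ (subsetP SL _ uS); have vC := subsetP LC _ (subsetP SL _ vS).
have g2u : g2 u = j by move: uS; rewrite inE => /andP[_ /eqP].
have levv : lev v = i by move: (subsetP SL _ vS); rewrite inE => /andP[_ /eqP].
have w1 := dist_walk (CrT u uC) g2u.
have w2 := dist_walk (proj1 (andP (Cr v vC))) levv.
pose Z := [set z | (z \notin S) || (z == u) || (z == v)].
have notS z : z \notin S -> z \in Z by move=> h; rewrite /Z in_set h.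
have HZu z : z \in [set z | (g2 z < j) || (z == u)] -> z \in Z.
  rewrite inE => /orP[h|/eqP->]; last by rewrite /Z in_set eqxx !orbT.
  apply: notS; apply/negP; rewrite inE => /andP[_ /eqP e]; by rewrite e ltnn in h.
have HZv z : z \in [set z | (lev z < i) || (z == v)] -> z \in Z.
  rewrite inE => /orP[h|/eqP->]; last by rewrite /Z in_set eqxx !orbT.
  apply: notS; apply/negP => zS.
  by move: (subsetP SL _ zS); rewrite inE => /andP[_ /eqP e]; rewrite e ltnn in h.
have c1 : connect (restr R Z) u r.
  have h : connect [rel x y | restr RT [set z | (g2 z < j) || (z == u)] y x] u r.
    by rewrite connect_rev /=.
  apply: connect_mono h => x y; rewrite /= !restrE => /and3P[hy hx Rxy].
  by rewrite (HZu _ hx) (HZu _ hy).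
have c2 : connect (restr R Z) r v.
  apply: connect_mono w2; apply: restr_sub; apply/subsetP=> z; exact: HZv.
have [Q [HQ UQ]] := extract nuv (connect_trans c1 c2).
exists Q; split.
- apply: sub_path HQ => x y; rewrite !restrE => /and3P[_ _ /and3P[_ _ ->]].
  done.
- by move: UQ; rewrite /= rcons_uniq => /andP[_ /andP[_]].
move=> z zQ; have zQ' : z \in rcons Q v by rewrite mem_rcons inE zQ orbT.
split.
  have HQR : path R u (rcons Q v).
    by apply: sub_path HQ => x y; rewrite restrE => /and3P[_ _ ->].
  exact: path_restr_in HQR z zQ'.
have := path_restr_in HQ zQ'; rewrite inE.
move: UQ; rewrite /= rcons_uniq => /andP[uQ /andP[vQ _]].
case/orP=> [/orP[//|/eqP zu]|/eqP zv].
  by move: uQ; rewrite -zu zQ'.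
by move: vQ; rewrite -zv zQ.
Qed.

Lemma main (VD : finType) (d : rel VD) (dl : loopless d) m :
  forall (VF : finType) (f : rel VF), loopless f -> #|arcs f| = m ->
  forall A : {set VD}, ~ colorable d A (4 ^ m * (#|VF| - 1)) ->
  exists (phi : VF -> VD) (P : VF -> VF -> seq VD),
    [/\ injective phi,
        (forall x y, f x y -> path d (phi x) (rcons (P x y) (phi y))),
        uniq (flatten [seq P a.1 a.2 | a <- enum (arcs f)] ++ [seq phi x | x <- enum VF]) &
        {subset flatten [seq P a.1 a.2 | a <- enum (arcs f)] ++ [seq phi x | x <- enum VF] <= A}].
Proof.
elim: m => [|m IH] VF f fl fm A HA.
  have [a0 a0A] : exists a0, a0 \in A.
    apply: NNPP => h; apply: HA; suff -> : A = set0 by apply: colorable0.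
    apply/setP=> z; rewrite [RHS]inE; apply/negbTE/negP => zA; apply: h; by exists z.
  have nA : #|VF| <= #|A|.
    rewrite leqNgt; apply/negP => h; apply: HA.
    apply: colorable_le (colorable_card A dl) _; rewrite expn0 mul1n; move: h; lia.
  have arcs0 : arcs f = set0 by apply/eqP; rewrite -cards_eq0 fm.
  pose phi (x : VF) := nth a0 (enum A) (enum_rank x).
  have rk (x : VF) : enum_rank x < size (enum A).
    rewrite -cardE; apply: leq_trans nA; exact: ltn_ord.
  have inj : injective phi.
    move=> x y /eqP; rewrite /phi nth_uniq ?enum_uniq ?rk //.
    by move/eqP/val_inj/enum_rank_inj.
  exists phi, (fun _ _ => [::]); split=> //.
  - move=> x y fxy; have : (x, y) \in arcs f by rewrite inE.
    by rewrite arcs0 inE.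
  - by rewrite arcs0 enum_set0 /= map_inj_uniq ?enum_uniq.
  - rewrite arcs0 enum_set0 /= => z /mapP[x _ ->].
    by rewrite -mem_enum /phi mem_nth ?rk.
have [[x0 y0] a0] : exists a, a \in arcs f by apply/card_gt0P; rewrite fm.
have fxy : f x0 y0 by move: a0; rewrite inE.
have nxy : x0 != y0 by apply: contraTneq fxy => ->; rewrite (negbTE (fl _)).
pose f' := [rel a b | f a b && ((a, b) != (x0, y0))].
have fl' : loopless f' by move=> x; rewrite /= (negbTE (fl x)).
have arcsf' : arcs f' = arcs f :\ (x0, y0).
  by apply/setP=> [[a b]]; rewrite !inE andbC.
have fm' : #|arcs f'| = m.
  by apply/eqP; rewrite -eqSS -fm arcsf' (cardsD1 (x0, y0) (arcs f)) a0.
set K := 4 ^ m * (#|VF| - 1).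
have HA' : ~ colorable d A ((K + K) + (K + K)).
  have -> : (K + K) + (K + K) = 4 ^ m.+1 * (#|VF| - 1).
    by rewrite expnS -mulnA -/K; lia.
  exact: HA.
have [S [SA HS HL]] := key HA'.
have [phi [P [inj Hpath Hu Hsub]]] := IH VF f' fl' fm' S HS.
have phiS x : phi x \in S by apply: Hsub; rewrite mem_cat map_f ?orbT ?mem_enum.
have nphi : phi x0 != phi y0 by rewrite (inj_eq inj).
have [Q [HQ UQ HQS]] := HL _ _ (phiS x0) (phiS y0) nphi.
pose P2 := fun a b => if (a == x0) && (b == y0) then Q else P a b.
have pe : perm_eq (enum (arcs f)) ((x0, y0) :: enum (arcs f')).
  apply: uniq_perm; first exact: enum_uniq.
    by rewrite /= enum_uniq mem_enum arcsf' !inE eqxx.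
  move=> z; rewrite in_cons !mem_enum arcsf' in_setD1.
  by case: (z =P (x0, y0)) => [->|] //=; rewrite a0.
have pW : perm_eq (flatten [seq P2 a.1 a.2 | a <- enum (arcs f)] ++ [seq phi x | x <- enum VF])
   (Q ++ (flatten [seq P a.1 a.2 | a <- enum (arcs f')] ++ [seq phi x | x <- enum VF])).
  rewrite catA; apply: perm_cat => //.
  apply: perm_trans (perm_flatten (perm_map _ pe)) _.
  rewrite /= /P2 /= !eqxx /=; apply: perm_cat => //.
  have -> // : [seq (if (a.1 == x0) && (a.2 == y0) then Q else P a.1 a.2) | a <- enum (arcs f')]
     = [seq P a.1 a.2 | a <- enum (arcs f')].
  apply/eq_in_map => [[a b]]; rewrite mem_enum arcsf' !inE => /andP[h _] /=.
  by move: h; rewrite xpair_eqE => /negbTE ->.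
exists phi, P2; split=> //.
- move=> a b fab; rewrite /P2.
  case: (boolP ((a == x0) && (b == y0))) => [/andP[/eqP-> /eqP->] //|h].
  by apply: Hpath; rewrite /= fab xpair_eqE h.
- rewrite (perm_uniq pW) cat_uniq UQ Hu andbT /=.
  apply/hasPn => z /Hsub zS; apply/negP => /HQS[_]; by rewrite zS.
- move=> z; rewrite (perm_mem pW) mem_cat => /orP[/HQS[]//|/Hsub zS].
  exact: subsetP SA _ zS.
Qed.

Theorem theorem32 (VF : finType) (f : rel VF) (hf : loopless f) :
  forall (VD : finType) (d : rel VD), loopless d ->
    4 ^ #|arcs f| * (#|VF| - 1) + 1 <= dichromatic d ->
    contains_subdivision f d.
Proof.
move=> VD d dl H.
have nc : ~ colorable d [set: VD] (4 ^ #|arcs f| * (#|VF| - 1)).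
  move=> [c [ck ca]]; move: H ck ca; set N := 4 ^ _ * _ => H ck ca.
  have hd : dicolorable d N.
    apply/existsP; exists [ffun x => Ordinal (ck x (in_setT x))]; apply/forallP => i.
    apply: acyclic_sub (ca i); apply/subsetP=> x; rewrite !inE ffunE => /eqP <- /=.
    by rewrite eqxx.
  rewrite addn1 in H.
  have := before_find 0 H; rewrite nth_iota ?add0n ?hd //.
  by apply: leq_trans H _; rewrite -[X in _ <= X](size_iota 0) find_size.
have [phi [P [inj Hp Hu _]]] := main dl hf (erefl _) nc.
by exists phi, P.
Qed.
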